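(* Let $N$ be a natural number, and let $\mathcal{T}_N$ be the class of all finite digraphs $D$ whose vertex set can be written as a disjoint union $D_e\cup D_c\cup D_f$ such that: (i) the digraph induced on $D_e$ is empty, and is either reflexive or irreflexive; (ii) the digraph induced on $D_c$ is complete and reflexive (every ordered pair $(x,y)$ with $x,y\in D_c$, including $x=y$, is an edge); (iii) $|D_f|\le N$; (iv) the connections between $D_e$ and $D_c$ are uniform: for all $x,y\in D_e$ and all $z,t\in D_c$ we have $(x,z)\in E(D)\Leftrightarrow (y,t)\in E(D)$ and $(z,x)\in E(D)\Leftrightarrow (t,y)\in E(D)$. Then $\mathcal{T}_N$ is well quasi-ordered under both the (standard) homomorphic image ordering and the strong homomorphic image ordering.
   Context: A digraph is a set $D$ with a binary relation $E(D)\subseteq D\times D$ (pairs in $E(D)$ are edges; loops $(x,x)$ are allowed). A digraph is reflexive if all loops $(x,x)$ are edges, irreflexive if none are; it is empty if there is no edge $(x,y)$ with $x\neq y$. A map $\phi:D_1\to D_2$ is a homomorphism if $(x,y)\in E(D_1)$ implies $(\phi(x),\phi(y))\in E(D_2)$; it is strong if moreover $\{(\phi(x),\phi(y)):(x,y)\in E(D_1)\}$ equals $E(D_2)\cap(\phi(D_1)\times\phi(D_1))$. An epimorphism is a surjective homomorphism. The (standard) homomorphic image ordering is: $A\preceq B$ iff there is an epimorphism $B\to A$; the strong homomorphic image ordering: $A\preceq B$ iff there is a strong epimorphism $B\to A$. A class is well quasi-ordered (wqo) if it contains no infinite strictly decreasing sequence and no infinite antichain (set of pairwise incomparable elements); structures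 are considered up to isomorphism. *)

(* Defs.v *)
From mathcomp Require Import all_boot.
Set Implicit Arguments. Unset Strict Implicit. Unset Printing Implicit Defensive.

(* A finite digraph, represented (up to isomorphism) on the vertex set 'I_n,
   with edge relation E (loops allowed). *)
Record digraph := Digraph { dsize : nat; dedge : rel 'I_dsize }.

Notation vert D := ('I_(dsize D)).

Definition is_hom (D1 D2 : digraph) (f : vert D1 -> vert D2) : Prop :=
  forall x y, @dedge D1 x y -> @dedge D2 (f x) (f y).

Definition is_strong_hom (D1 D2 : digraph) (f : vert D1 -> vert D2) : Prop :=
  @is_hom D1 D2 f /\
  forall a b, @dedge D2 (f a) (f b) ->
    exists x y, [/\ @dedge D1 x y, f x = f a & f y = f b].

Definition surj (A B : Type) (f : A -> B) : Prop := forall b, exists a, f a = b.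

Definition hom_le (A B : digraph) : Prop :=
  exists f : vert B -> vert A, @is_hom B A f /\ surj f.

Definition strong_hom_le (A B : digraph) : Prop :=
  exists f : vert B -> vert A, @is_strong_hom B A f /\ surj f.

Definition wqo (P : digraph -> Prop) (le : digraph -> digraph -> Prop) : Prop :=
  (~ exists s : nat -> digraph, (forall i, P (s i)) /\
        forall i, le (s i.+1) (s i) /\ ~ le (s i) (s i.+1))
  /\
  (~ exists s : nat -> digraph, (forall i, P (s i)) /\
        forall i j, i <> j -> ~ le (s i) (s j)).

Definition in_TN (N : nat) (D : digraph) : Prop :=
  exists De Dc Df : {set vert D},
    [/\ [disjoint De & Dc], [disjoint De & Df], [disjoint Dc & Df],
        De :|: Dc :|: Df = setT &
    [/\
        (forall x y, x \in De -> y \in De -> x != y -> ~~ @dedge D x y) /\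
        ((forall x, x \in De -> @dedge D x x) \/
         (forall x, x \in De -> ~~ @dedge D x x)),
        (forall x y, x \in Dc -> y \in Dc -> @dedge D x y),
        #|Df| <= N &
        (forall x y z t, x \in De -> y \in De -> z \in Dc -> t \in Dc ->
           (@dedge D x z = @dedge D y t) /\ (@dedge D z x = @dedge D t y))]].

(* Main.v *)
Require Import Defs.
From mathcomp Require Import all_boot.
From Stdlib Require Import Classical ClassicalEpsilon.
From mathcomp Require Import zify.
Set Implicit Arguments. Unset Strict Implicit. Unset Printing Implicit Defensive.

Definition af (X : Type) (r : rel X) :=
  forall s : nat -> X, exists i j, i < j /\ r (s i) (s j).

Lemma af_subseq (X : Type) (r : rel X) :
  (forall y x z, r x y -> r y z -> r x z) -> af r ->
  forall s : nat -> X, exists phi : nat -> nat,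
    (forall n, phi n < phi n.+1) /\
    (forall i j, i < j -> r (s (phi i)) (s (phi j))).
Proof.
move=> tr afr s.
have [N0 HN0] : exists N0, forall n, N0 <= n -> exists m, n < m /\ r (s n) (s m).
  apply: NNPP => H.
  have bad : forall N0, exists n, N0 <= n /\ ~ exists m, n < m /\ r (s n) (s m).
    move=> N0; apply: NNPP => H2; apply: H; exists N0 => n Hn.
    apply: NNPP => H3; apply: H2; exists n; split => //.
  pose nxt N0 := proj1_sig (constructive_indefinite_description _ (bad N0)).
  have nxtP N0 : N0 <= nxt N0 /\ ~ exists m, nxt N0 < m /\ r (s (nxt N0)) (s m).
    exact: (proj2_sig (constructive_indefinite_description _ (bad N0))).
  pose t k := iter k (fun x => nxt x.+1) (nxt 0).
  have tinc k : t k < t k.+1 by have [h _] := nxtP (t k).+1.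
  have tmono : {homo t : i j / i < j >-> i < j}.
    apply: homo_ltn => //; move=> y x z; exact: ltn_trans.
  have tbad i : ~ exists m, t i < m /\ r (s (t i)) (s m).
    by case: i => [|i] /=; [have [_ ?] := nxtP 0 | have [_ ?] := nxtP (t i).+1].
  have [i [j [ij rij]]] := afr (fun k => s (t k)).
  by apply: (tbad i); exists (t j); split => //; apply: tmono.
have ex n : exists m, n < m /\ (N0 <= n -> r (s n) (s m)).
  case: (leqP N0 n) => h.
    by have [m [h1 h2]] := HN0 n h; exists m.
  by exists n.+1; split => // h'; move: h; rewrite ltnNge h'.
pose step n := proj1_sig (constructive_indefinite_description _ (ex n)).
have stepP n : n < step n /\ (N0 <= n -> r (s n) (s (step n))).
  exact: (proj2_sig (constructive_indefinite_description _ (ex n))).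
pose phi k := iter k step N0.
have phiN k : N0 <= phi k.
  elim: k => [|k IH] //=; apply: leq_trans IH _; apply: ltnW; exact: (proj1 (stepP _)).
exists phi; split.
  by move=> n /=; exact: (proj1 (stepP _)).
apply: (@homo_ltn _ (fun k => s (phi k)) (fun a b => r a b)) => //.
by move=> n /=; apply: (proj2 (stepP _)); apply: phiN.
Qed.

Lemma af_inter (X : Type) (I : eqType) (R : I -> rel X) :
  (forall k, forall y x z, R k x y -> R k y z -> R k x z) ->
  (forall k, af (R k)) ->
  forall (l : seq I) (s : nat -> X), exists phi : nat -> nat,
    (forall n, phi n < phi n.+1) /\
    (forall i j, i < j -> forall k, k \in l -> R k (s (phi i)) (s (phi j))).
Proof.
move=> tr afR; elim=> [|k l IH] s.
  by exists id; split.
have [phi [inc Hphi]] := IH s.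
have [psi [incp Hpsi]] := af_subseq (tr k) (afR k) (fun n => s (phi n)).
have mono : forall f : nat -> nat, (forall n, f n < f n.+1) -> {homo f : i j / i < j >-> i < j}.
  by move=> f hf; apply: homo_ltn => // y x z; apply: ltn_trans.
exists (fun n => phi (psi n)); split.
  by move=> n; apply: (mono _ inc); apply: incp.
move=> i j ij k'; rewrite inE => /orP [/eqP -> | kl].
  exact: Hpsi.
by apply: Hphi => //; apply: (mono _ incp).
Qed.

Lemma af_leq : af (fun m n : nat => m <= n).
Proof.
move=> s.
suff H : forall n i, s i <= n -> exists i j, i < j /\ s i <= s j by exact: (H _ 0 (leqnn _)).
elim=> [|n IH] i hi.
  by exists i, i.+1; split => //; move: hi; rewrite leqn0 => /eqP ->.
case: (leqP (s i) (s i.+1)) => h.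
  by exists i, i.+1.
by apply: (IH i.+1); rewrite -ltnS; apply: leq_trans h hi.
Qed.

Lemma af_eqb : af (fun a b : bool => a == b).
Proof.
move=> s.
case e0: (s 0); case e1: (s 1); case e2: (s 2);
  by [exists 0, 1; rewrite e0 e1 | exists 0, 2; rewrite e0 e2 | exists 1, 2; rewrite e1 e2].
Qed.
Definition Eset (D : digraph) : {set vert D * vert D} := [set p | dedge p.1 p.2].

Lemma Eset_le D : #|Eset D| <= dsize D * dsize D.
Proof.
apply: leq_trans (max_card _) _.
by rewrite card_prod card_ord.
Qed.

Lemma surj_size (A B : digraph) (f : vert B -> vert A) : surj f -> dsize A <= dsize B.
Proof.
move=> sf; have [g gK] := fin_all_exists sf.
have ig : injective g by move=> a b e; rewrite -(gK a) -(gK b) e.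
by have := leq_card g ig; rewrite !card_ord.
Qed.

Lemma back (A B : digraph) (f : vert B -> vert A) :
  is_hom f -> surj f -> dsize A = dsize B -> #|Eset A| <= #|Eset B| ->
  exists g : vert A -> vert B, is_strong_hom g /\ surj g.
Proof.
move=> hf sf eAB cE; have [g gK] := fin_all_exists sf.
have ig : injective g by move=> a b e; rewrite -(gK a) -(gK b) e.
have onto : forall b, b \in codom g by apply: inj_card_onto => //; rewrite !card_ord eAB.
have fK : forall b, g (f b) = b.
  by move=> b; have /codomP [a ->] := onto b; rewrite gK.
have fi : injective f by move=> a b e; rewrite -(fK a) -(fK b) e.
pose h (p : vert B * vert B) := (f p.1, f p.2).
have hi : injective h by move=> [a b] [c d] [/fi -> /fi ->].
have sub : [set h p | p in Eset B] \subset Eset A.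
  apply/subsetP => q /imsetP [p]; rewrite inE => ep ->; rewrite inE /=; exact: hf.
have eq : [set h p | p in Eset B] = Eset A.
  by apply/eqP; rewrite eqEcard sub card_imset.
exists g; split; last first.
  by move=> b; exists (f b); rewrite fK.
split.
  move=> a b eab.
  have : (a, b) \in Eset A by rewrite inE.
  rewrite -eq => /imsetP [[x y]]; rewrite inE /= => exy [-> ->].
  by rewrite !fK.
move=> a b e; exists a, b; split => //.
by have := hf _ _ e; rewrite !gK.
Qed.

Lemma no_desc (P : digraph -> Prop) (le : digraph -> digraph -> Prop) :
  (forall A B, le A B -> hom_le A B) -> (forall A B, strong_hom_le A B -> le A B) ->
  ~ exists s : nat -> digraph, (forall i, P (s i)) /\
        forall i, le (s i.+1) (s i) /\ ~ le (s i) (s i.+1).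
Proof.
move=> lh sl [s [_ Hs]].
suff H : forall n d i, dsize (s i) = n -> n * n - #|Eset (s i)| = d -> False
  by exact: (H _ _ 0 erefl erefl).
elim/ltn_ind => n IHn; elim/ltn_ind => d IHd i en ed.
have [l1 nl] := Hs i.
have [f [hf sf]] := lh _ _ l1.
have sz := surj_size sf.
rewrite leq_eqVlt in sz; case/orP: sz => [/eqP ez | lt]; last first.
  by apply: (IHn _ _ _ i.+1 erefl erefl); rewrite -en.
case: (leqP #|Eset (s i.+1)| #|Eset (s i)|) => ce.
  have [g [sg ssg]] := back hf sf ez ce.
  by apply: nl; apply: sl; exists g.
apply: (IHd _ _ i.+1 _ erefl); last by rewrite ez en.
have h1 := Eset_le (s i.+1); have h2 := Eset_le (s i).
move: ce h1 h2; rewrite -ed; move: #|Eset (s i.+1)| #|Eset (s i)| => a b.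
rewrite ez en; move: (n * n) => nn; lia.
Qed.
Definition good (C : finType) (R : rel C) (L : pred C) (D : digraph) (col : vert D -> C) :=
  [/\ forall x y, x != y -> dedge x y = R (col x) (col y),
      forall x, dedge x x = L (col x) &
      forall x y, x != y -> col x = col y -> R (col x) (col x) -> L (col x)].

Lemma main_hom (C : finType) (R : rel C) (L : pred C) (D D' : digraph)
  (col : vert D -> C) (col' : vert D' -> C) :
  good R L col -> good R L col' ->
  (forall c, #|[set x | col x == c]| <= #|[set x | col' x == c]|) ->
  (forall c, 0 < #|[set x | col' x == c]| -> 0 < #|[set x | col x == c]|) ->
  strong_hom_le D D'.
Proof.
move=> [g1 g2 g3] [g1' g2' g3'] hle hpos.
pose P c := [set x | col x == c]; pose P' c := [set x | col' x == c].
have ex : forall x' : vert D', exists y : vert D,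
   col y = col' x' /\
   index y (enum (P (col' x'))) = minn (index x' (enum (P' (col' x')))) (#|P (col' x')|.-1).
  move=> x'; set c := col' x'.
  have : 0 < #|P c| by apply: hpos; apply/card_gt0P; exists x'; rewrite inE.
  move=> pos; have [y0 _] := card_gt0P pos.
  set k := minn _ _.
  have kl : k < size (enum (P c)) by rewrite -cardE /k; lia.
  exists (nth y0 (enum (P c)) k); split.
    by have := mem_nth y0 kl; rewrite mem_enum inE => /eqP.
  by rewrite index_uniq // enum_uniq.
have [f fP] := fin_all_exists ex.
have fc : forall x, col (f x) = col' x by move=> x; case: (fP x).
exists f; split; last first.
  move=> y; set c := col y.
  have yin : y \in enum (P c) by rewrite mem_enum inE.
  have rl : index y (enum (P c)) < #|P c| by rewrite cardE index_mem.
  have pos' : 0 < #|P' c| by apply: leq_trans (hle c); apply: leq_ltn_trans rl.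
  have [y0 _] := card_gt0P pos'.
  have rl' : index y (enum (P c)) < size (enum (P' c)) by rewrite -cardE; apply: leq_trans rl (hle c).
  set x' := nth y0 (enum (P' c)) (index y (enum (P c))).
  have x'c : col' x' = c by have := mem_nth y0 rl'; rewrite mem_enum inE => /eqP.
  exists x'.
  have [e1 e2] := fP x'; rewrite x'c in e1 e2.
  rewrite /x' index_uniq // ?enum_uniq // in e2.
  have em : minn (index y (enum (P c))) #|P c|.-1 = index y (enum (P c)) by lia.
  rewrite em in e2.
  have fin : f x' \in enum (P c) by rewrite mem_enum inE -/x' fc x'c.
  by rewrite -(nth_index y fin) e2 nth_index.
split.
  move=> a b eab.
  case: (eqVneq (f a) (f b)) => [e|ne].
    rewrite -e g2 fc.
    case: (eqVneq a b) => [eab'|nab]; first by move: eab; rewrite -eab' g2'.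
    have cab : col' a = col' b by rewrite -!fc e.
    apply: (g3' a b nab cab); rewrite {2}cab -g1' //.
  have nab : a != b by apply: contra ne => /eqP ->.
  by rewrite g1 // !fc -g1'.
move=> a b e.
case: (eqVneq (f a) (f b)) => [ee|ne].
  exists a, a; split => //.
  by rewrite g2' -fc -g2 {2}ee.
have nab : a != b by apply: contra ne => /eqP ->.
exists a, b; split => //.
by rewrite g1' // -!fc -g1.
Qed.
Definition Cty (N : nat) : finType :=
  (bool * bool * bool * bool * bool * 'I_N.+1 * {ffun 'I_N.+1 -> bool} * {ffun 'I_N.+1 -> bool})%type.

Section Col.
Variable N : nat.
Definition cE (c : Cty N) := c.1.1.1.1.1.1.1.
Definition cC (c : Cty N) := c.1.1.1.1.1.1.2.
Definition cL (c : Cty N) := c.1.1.1.1.1.2.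
Definition cb1 (c : Cty N) := c.1.1.1.1.2.
Definition cb2 (c : Cty N) := c.1.1.1.2.
Definition cidx (c : Cty N) := c.1.1.2.
Definition cout (c : Cty N) := c.1.2.
Definition cin (c : Cty N) := c.2.

Definition Rc (c1 c2 : Cty N) : bool :=
  if ~~ (cE c2 || cC c2) then cout c1 (cidx c2)
  else if ~~ (cE c1 || cC c1) then cin c2 (cidx c1)
  else if cE c1 then (if cE c2 then false else cb1 c1)
  else (if cE c2 then cb2 c2 else true).
Definition Lc (c : Cty N) : bool := cL c.
End Col.

Lemma TN_color N D : in_TN N D -> exists col : vert D -> Cty N, good (@Rc N) (@Lc N) col.
Proof.
move=> [De [Dc [Df [dEC dEF dCF cov [[iE _] iC iF iU]]]]].
pose idx (v : vert D) : 'I_N.+1 := inord (index v (enum Df)).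
have idxi : forall v w, v \in Df -> w \in Df -> idx v = idx w -> v = w.
  move=> v w vf wf e0.
  have bd : forall u, u \in Df -> index u (enum Df) < N.+1.
    by move=> u uf; rewrite ltnS; apply: leq_trans iF; apply: ltnW; rewrite cardE index_mem mem_enum.
  have := congr1 (@nat_of_ord _) e0; rewrite /idx !inordK ?bd //.
  by move=> e; rewrite -[v](@nth_index _ v v (enum Df)) ?mem_enum // e nth_index ?mem_enum.
pose col (v : vert D) : Cty N :=
  (v \in De, v \in Dc, dedge v v, [exists z in Dc, dedge v z], [exists z in Dc, dedge z v],
   idx v, [ffun k => [exists w in Df, (idx w == k) && dedge v w]],
   [ffun k => [exists w in Df, (idx w == k) && dedge w v]]).
have inF : forall v, ~~ ((v \in De) || (v \in Dc)) -> v \in Df.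
  move=> v; have : v \in De :|: Dc :|: Df by rewrite cov inE.
  by rewrite !inE; case: (v \in De); case: (v \in Dc).
have nEC : forall v, v \in De -> v \in Dc -> False.
  by move=> v h1 h2; have := disjointFr dEC h1; rewrite h2.
have nEF : forall v, v \in De -> v \in Df -> False.
  by move=> v h1 h2; have := disjointFr dEF h1; rewrite h2.
have nCF : forall v, v \in Dc -> v \in Df -> False.
  by move=> v h1 h2; have := disjointFr dCF h1; rewrite h2.
have outP : forall x y, y \in Df -> [exists w in Df, (idx w == idx y) && dedge x w] = dedge x y.
  move=> x y yf; apply/existsP/idP => [[w /and3P [wf /eqP e xw]]|xy].
    by rewrite -(idxi _ _ wf yf e).
  by exists y; rewrite yf eqxx xy.
have inP : forall x y, x \in Df -> [exists w in Df, (idx w == idx x) && dedge w y] = dedge x y.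
  move=> x y xf; apply/existsP/idP => [[w /and3P [wf /eqP e xw]]|xy].
    by rewrite -(idxi _ _ wf xf e).
  by exists x; rewrite xf eqxx xy.
exists col; split.
- move=> x y nxy; rewrite /Rc /cE /cC /cidx /cout /cin /cb1 /cb2 /=.
  case: ifP => [hy|hy].
    by rewrite ffunE outP //; apply: inF; rewrite hy.
  case: ifP => [hx|hx].
    by rewrite ffunE inP //; apply: inF; rewrite hx.
  move/negbFE: hx => hx; move/negbFE: hy => hy.
  case xE: (x \in De); case yE: (y \in De).
  + by apply/negbTE; apply: iE.
  + have yC : y \in Dc by move: hy; rewrite yE.
    apply/idP/existsP => [xy|[z /andP [zC xz]]]; first by exists y; rewrite yC.
    by have [<- _] := iU x x z y xE xE zC yC.
  + have xC : x \in Dc by move: hx; rewrite xE.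
    apply/idP/existsP => [xy|[z /andP [zC zy]]]; first by exists x; rewrite xC.
    by have [_ <-] := iU y y z x yE yE zC xC.
  + have xC : x \in Dc by move: hx; rewrite xE.
    have yC : y \in Dc by move: hy; rewrite yE.
    exact: iC.
- by [].
- move=> x y nxy e; rewrite /Rc /Lc /cE /cC /cidx /cL /=.
  case: ifP => [hx|hx].
    have xf := inF x hx.
    have yf : y \in Df.
      apply: inF; move: hx; rewrite /col in e.
      by case: e => -> ->.
    have : idx x = idx y by case: e.
    by move/(idxi _ _ xf yf)=> exy; rewrite exy eqxx in nxy.
  rewrite hx; case xE: (x \in De) => //= _.
  move/negbFE: hx; rewrite xE /= => xC.
  exact: iC.
Qed.

Lemma strong_hom (A B : digraph) : strong_hom_le A B -> hom_le A B.
Proof. by move=> [f [[h _] s]]; exists f. Qed.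

Lemma no_anti N : ~ exists s : nat -> digraph, (forall i, in_TN N (s i)) /\
        forall i j, i <> j -> ~ strong_hom_le (s i) (s j).
Proof.
move=> [s [Hs Ha]].
pose cols i := proj1_sig (constructive_indefinite_description _ (TN_color (Hs i))).
have colsP i : good (@Rc N) (@Lc N) (cols i).
  exact: (proj2_sig (constructive_indefinite_description _ (TN_color (Hs i)))).
pose u i (c : Cty N) := #|[set x | cols i x == c]|.
pose R (k : Cty N * bool) (a b : Cty N -> nat) :=
  if k.2 then (a k.1 == 0) == (b k.1 == 0) else a k.1 <= b k.1.
have tr : forall k, forall y x z, R k x y -> R k y z -> R k x z.
  move=> [c [|]] y x z; rewrite /R /=; first by move=> /eqP -> /eqP ->.
  exact: leq_trans.
have afR : forall k, af (R k).
  move=> [c [|]] t; rewrite /R /=.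
    exact: (af_eqb (fun n => t n c == 0)).
  exact: (af_leq (fun n => t n c)).
have [phi [inc H]] := af_inter tr afR (enum {: Cty N * bool}) u.
apply: (Ha (phi 0) (phi 1)).
  by move=> e; have := inc 0; rewrite e ltnn.
apply: (main_hom (colsP _) (colsP _)).
  by move=> c; have := H 0 1 erefl (c, false); rewrite mem_enum /R /=; apply.
move=> c; have := H 0 1 erefl (c, true); rewrite mem_enum /R /= => /(_ isT).
by rewrite !lt0n => /eqP ->.
Qed.

Theorem theorem2p6 (N : nat) :
  wqo (in_TN N) hom_le /\ wqo (in_TN N) strong_hom_le.
Proof.
split; split.
- by apply: no_desc => // A B; apply: strong_hom.
- move=> [s [Hs Ha]]; apply: (no_anti (N := N)); exists s; split => // i j ij h.
  by apply: (Ha i j ij); apply: strong_hom.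
- by apply: no_desc => // A B; apply: strong_hom.
- by apply: no_anti.
Qed.
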